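(* For any prime $p$ and positive integer $n$, \[ \frac{\mathfrak{C}_2(\mathbb{Z}/p^n \mathbb{Z}) }{p^{6n}}= \left(1+\frac{1}{p}\right)\left(1-\frac{1}{p^2}\right)^{-1}\left(1-\frac{1}{p^3}\right)\left(1-\frac{1}{p^{2\lceil n/2\rceil}}\right) + O(n^2p^{-n/2}), \] with an absolute implied constant. In particular, the limit \[ \sigma_p = \lim_{n\to\infty} \frac{\mathfrak{C}_2(\mathbb{Z}/p^n \mathbb{Z}) }{p^{6n}} = \left(1+\frac{1}{p}\right)\left(1-\frac{1}{p^2}\right)^{-1}\left(1-\frac{1}{p^3}\right) \] exists.
   Context: For a prime $p$ and positive integer $n$, $\mathrm{Mat}_2(\mathbb{Z}/p^n\mathbb{Z})$ is the set of $2\times 2$ matrices with entries in $\mathbb{Z}/p^n\mathbb{Z}$, and $\mathfrak{C}_2(\mathbb{Z}/p^n \mathbb{Z})$ is the number of pairs $(A,B)\in \mathrm{Mat}_2(\mathbb{Z}/p^n\mathbb{Z})^2$ with $AB=BA$. *)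

(* Defs.v *)
From HB Require Import structures.
From mathcomp Require Import all_boot all_order all_algebra.
From mathcomp Require Import all_classical all_reals all_analysis.
Set Implicit Arguments. Unset Strict Implicit. Unset Printing Implicit Defensive.
Import Order.TTheory GRing.Theory Num.Theory.
Local Open Scope ring_scope.

(* C2 p n = number of pairs (A,B) of 2x2 matrices over Z/p^nZ with AB = BA.
   For p prime and n >= 1 we have p^n >= 2, so 'Z_(p^n) is exactly Z/p^nZ. *)
Definition C2 (p n : nat) : nat :=
  #|[set AB : 'M['Z_(p ^ n)]_2 * 'M['Z_(p ^ n)]_2 | AB.1 *m AB.2 == AB.2 *m AB.1]|.


Definition sigma_p (R : realType) (p : nat) : R :=
  (1 + (p%:R)^-1) * (1 - (p%:R ^+ 2)^-1)^-1 * (1 - (p%:R ^+ 3)^-1).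

Definition main_term (R : realType) (p n : nat) : R :=
  sigma_p R p * (1 - (p%:R ^+ (2 * uphalf n))^-1).

Definition C2_ratio (R : realType) (p n : nat) : R :=
  (C2 p n)%:R / (p%:R ^+ (6 * n)).

(* Main.v *)
Require Import Defs.
From HB Require Import structures.
From mathcomp Require Import all_boot all_order all_algebra.
From mathcomp Require Import all_classical all_reals all_analysis.
From mathcomp Require Import zify ring lra.
Import Order.TTheory GRing.Theory Num.Theory.
Import numFieldNormedType.Exports.
Set Implicit Arguments. Unset Strict Implicit. Unset Printing Implicit Defensive.

Module CountPart.

Definition cond M e b c u y z : bool :=
  [&& b * z == c * y %[mod M], e * y == b * u %[mod M] & c * u == e * z %[mod M]].
Definition K M e b c := \sum_(u<M)\sum_(y<M)\sum_(z<M) cond M e b c u y z.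
Definition S3 M (F : nat -> nat -> nat -> nat) :=
  \sum_(e<M)\sum_(b<M)\sum_(c<M) F e b c.
Definition G M := S3 M (K M).

Lemma block a b (F : nat -> nat) :
  \sum_(i < a * b) F i = \sum_(j<a)\sum_(r<b) F (j * b + r).
Proof.
elim: a => [|a IH]; first by rewrite mul0n !big_ord0.
rewrite big_ord_recr /= -IH mulSn addnC big_split_ord /=.
congr (_ + _); apply: eq_bigr => i _ //=.
Qed.

Lemma periodic N p (h : nat -> nat) : (forall u, h (u %% N) = h u) ->
  \sum_(u < p * N) h u = p * \sum_(u<N) h u.
Proof.
move=> hP; rewrite block.
rewrite (eq_bigr (fun _ => \sum_(r < N) h r)); last first.
  move=> j _; apply: eq_bigr => r _; by rewrite -hP modnMDl modn_small.
by rewrite sum_nat_const card_ord.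
Qed.

Lemma divsum p N (f : nat -> nat) : 0 < p ->
  \sum_(e < N * p) (p %| e) * f e = \sum_(j<N) f (j * p).
Proof.
case: p => // p _; rewrite (block N p.+1 (fun e => (p.+1 %| e) * f e)); apply: eq_bigr => j _.
rewrite big_ord_recl /= addn0 dvdn_mull // mul1n big1 ?addn0 // => r _.
rewrite dvdn_addr ?dvdn_mull // /bump /= add1n.
have /gtnNdvd -> // : r.+1 < p.+1 by rewrite ltnS ltn_ord.
Qed.

Lemma S3ext M F1 F2 : (forall e b c, e < M -> b < M -> c < M -> F1 e b c = F2 e b c) ->
  S3 M F1 = S3 M F2.
Proof.
move=> H; apply: eq_bigr => e _; apply: eq_bigr => b _; apply: eq_bigr => c _.
exact: H.
Qed.

Lemma S3D M F1 F2 : S3 M (fun e b c => F1 e b c + F2 e b c) = S3 M F1 + S3 M F2.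
Proof.
rewrite /S3 -big_split; apply: eq_bigr => e _.
rewrite -big_split; apply: eq_bigr => b _; by rewrite -big_split.
Qed.

Lemma S3Ml M k F : S3 M (fun e b c => k * F e b c) = k * S3 M F.
Proof.
rewrite /S3 big_distrr; apply: eq_bigr => e _.
rewrite big_distrr; apply: eq_bigr => b _; by rewrite big_distrr.
Qed.

Lemma S3const M k : S3 M (fun _ _ _ => k) = M^3 * k.
Proof. by rewrite /S3 !sum_nat_const !card_ord; lia. Qed.

Lemma divsum3 p N H : 0 < p ->
  S3 (N * p) (fun e b c => (p %| e) * ((p %| b) * ((p %| c) * H e b c))) =
  S3 N (fun e b c => H (e * p) (b * p) (c * p)).
Proof.
move=> p0; rewrite /S3.
transitivity (\sum_(e<N * p) (p%|e) * \sum_(b<N * p) (p%|b) * \sum_(c<N * p) (p%|c) * H e b c).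
  apply: eq_bigr => e _; rewrite big_distrr; apply: eq_bigr => b _.
  by rewrite !big_distrr.
rewrite (divsum N (fun e => \sum_(b < N * p) (p %| b) * \sum_(c < N * p) (p %| c) * H e b c)) //.
apply: eq_bigr => e _.
rewrite (divsum N (fun b => \sum_(c < N * p) (p %| c) * H (e * p) b c)) //.
apply: eq_bigr => b _.
by rewrite (divsum N (fun c => H (e * p) (b * p) c)).
Qed.

Lemma cond_modu M e b c u y z : cond M e b c (u %% M) y z = cond M e b c u y z.
Proof. by rewrite /cond !modnMmr. Qed.
Lemma cond_mody M e b c u y z : cond M e b c u (y %% M) z = cond M e b c u y z.
Proof. by rewrite /cond !modnMmr. Qed.
Lemma cond_modz M e b c u y z : cond M e b c u y (z %% M) = cond M e b c u y z.
Proof. by rewrite /cond !modnMmr. Qed.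

Lemma modmul p N x y : 0 < p -> (p * x == p * y %[mod p * N]) = (x == y %[mod N]).
Proof. by move=> p0; rewrite -!muln_modr eqn_pmul2l. Qed.

Lemma Kdiv p N e b c : 0 < p ->
  K (p * N) (e * p) (b * p) (c * p) = p^3 * K N e b c.
Proof.
move=> p0.
have E : forall u y z, cond (p * N) (e * p) (b * p) (c * p) u y z = cond N e b c u y z.
  move=> u y z; rewrite /cond.
  have R x w : x * p * w = p * (x * w) by rewrite mulnAC mulnC.
  by rewrite !R !modmul.
rewrite /K.
transitivity (\sum_(u < p * N) \sum_(y < p * N) p * \sum_(z < N) cond N e b c u y z).
  apply: eq_bigr => u _; apply: eq_bigr => y _.
  rewrite -(@periodic N p (fun z => cond N e b c u y z)); last by move=> z; rewrite cond_modz.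
  by apply: eq_bigr => z _; rewrite E.
transitivity (\sum_(u < p * N) p * (p * \sum_(y < N) \sum_(z < N) cond N e b c u y z)).
  apply: eq_bigr => u _; rewrite -big_distrr /=.
  rewrite -(@periodic N p (fun y => \sum_(z < N) cond N e b c u y z)) //.
  by move=> y; apply: eq_bigr => z _; rewrite cond_mody.
rewrite -big_distrr -big_distrr /=.
rewrite (@periodic N p (fun u => \sum_(y<N) \sum_(z < N) cond N e b c u y z)).
  by rewrite !mulnA; congr (_ * _); lia.
by move=> u; apply: eq_bigr => y _; apply: eq_bigr => z _; rewrite cond_modu.
Qed.

Lemma natZ M x y : 1 < M -> (x == y %[mod M]) = (x%:R == y%:R :> 'Z_M)%R.
Proof.
move=> M1; apply/eqP/eqP => H.
  by apply: val_inj; rewrite /= !val_Zp_nat.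
by move/(congr1 val): H; rewrite /= !val_Zp_nat.
Qed.

Lemma sum_hit M (a : 'Z_M) : 1 < M -> \sum_(y < M) (y%:R == a :> 'Z_M)%R = 1.
Proof.
move=> M1.
have aM : val a < M by rewrite -[M in _ < M](Zp_cast M1); exact: ltn_ord.
rewrite (bigD1 (Ordinal aM)) //= natr_Zp eqxx big1 ?addn0 // => y Hy.
apply/eqP; rewrite eqb0; apply: contra Hy => /eqP H; apply/eqP; apply: val_inj => /=.
by rewrite -H val_Zp_nat // modn_small.
Qed.

Lemma Kunit M e b c : 1 < M -> coprime M e -> K M e b c = M.
Proof.
move=> M1 cop.
pose E := (e%:R : 'Z_M)%R.
have hE : (E \is a GRing.unit)%R by rewrite unitZpE.
have C u y z : cond M e b c u y z =
   ((y%:R == E^-1 * b%:R * u%:R :> 'Z_M) && (z%:R == E^-1 * c%:R * u%:R :> 'Z_M))%R.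
  rewrite /cond !natZ // !GRing.natrM -/E.
  move: (b%:R)%R (c%:R)%R (u%:R)%R (y%:R)%R (z%:R)%R => B C U Y Z.
  apply/idP/idP => [/and3P [/eqP h1 /eqP h2 /eqP h3]|/andP [/eqP h1 /eqP h2]]; [apply/andP|apply/and3P]; split; apply/eqP.
  - by rewrite -GRing.mulrA -h2 GRing.mulKr.
  - by rewrite -GRing.mulrA h3 GRing.mulKr.
  - rewrite h1 h2; ring.
  - by rewrite h1 !GRing.mulrA GRing.mulrV // GRing.mul1r.
  - by rewrite h2 !GRing.mulrA GRing.mulrV // GRing.mul1r.
rewrite /K (eq_bigr (fun _ => 1)); first by rewrite sum_nat_const card_ord muln1.
move=> u _.
have -> : \sum_(y < M) \sum_(z < M) cond M e b c u y z = \sum_(y < M) (y%:R == E^-1 * b%:R * u%:R :> 'Z_M)%R.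
  apply: eq_bigr => y _.
  rewrite -[RHS]muln1 -(@sum_hit M (E^-1 * c%:R * u%:R)%R M1) big_distrr.
  by apply: eq_bigr => z _; rewrite C; case: (_ == _); case: (_ == _).
exact: sum_hit.
Qed.

Lemma Krot M e b c : K M e b c = K M b c e.
Proof.
rewrite /K exchange_big /=; apply: eq_bigr => y _.
rewrite exchange_big /=; apply: eq_bigr => z _; apply: eq_bigr => u _.
rewrite /cond; by case: (_ == _); case: (_ == _); case: (_ == _).
Qed.

Lemma Kunit3 M e b c : 1 < M -> [|| coprime M e, coprime M b | coprime M c] -> K M e b c = M.
Proof.
move=> M1 /or3P [h|h|h]; first exact: Kunit.
  by rewrite Krot Kunit.
by rewrite -Krot Kunit.
Qed.

Lemma Grec p N : prime p -> 0 < N -> (forall x, ~~ (p %| x) -> coprime (p * N) x) ->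
  G (p * N) + N^3 * (p * N) = (p * N)^4 + p^3 * G N.
Proof.
move=> pp N1 cop; have p0 := prime_gt0 pp.
have p1 := prime_gt1 pp.
have M1 : 1 < p * N by rewrite (leq_trans p1) // leq_pmulr.
pose al e b c := (p %| e) * ((p %| b) * ((p %| c) * 1)).
have Keq : forall e b c, K (p * N) e b c + al e b c * (p * N) =
    p * N + p^3 * ((p %| e) * ((p %| b) * ((p %| c) * K N (e %/ p) (b %/ p) (c %/ p)))).
  move=> e b c; rewrite /al.
  case: (boolP (p %| e)) => he; case: (boolP (p %| b)) => hb; case: (boolP (p %| c)) => hc;
    rewrite ?mul1n ?mul0n ?muln0 ?addn0 ?muln1;
    try (apply: Kunit3 => //; by rewrite ?(cop _ he) ?(cop _ hb) ?(cop _ hc) ?orbT).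
  by rewrite -{1}(divnK he) -{1}(divnK hb) -{1}(divnK hc) Kdiv // addnC.
have H : S3 (N * p) (fun e b c => K (p * N) e b c + p * N * al e b c) =
   S3 (N * p) (fun e b c => p * N + p^3 * ((p %| e) * ((p %| b) * ((p %| c) * K N (e %/ p) (b %/ p) (c %/ p))))).
  by apply: S3ext => e b c _ _ _; rewrite [p * N * _]mulnC; exact: Keq.
rewrite !S3D S3const !S3Ml /al (@divsum3 p N (fun _ _ _ => 1) p0) in H.
rewrite (@divsum3 p N (fun e b c => K N (e %/ p) (b %/ p) (c %/ p)) p0) in H.
rewrite S3const in H.
have HG : S3 N (fun e b c => K N (e * p %/ p) (b * p %/ p) (c * p %/ p)) = G N.
  by apply: S3ext => e b c _ _ _; rewrite !mulnK.
rewrite HG in H.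
rewrite -[N * p]mulnC -/(G (p * N)) in H.
move: H; rewrite /G; lia.
Qed.

Lemma G1 : G 1 = 1.
Proof. by rewrite /G /S3 /K !big_ord1 /cond !modn1. Qed.

Lemma Gclosed p n : prime p ->
  p^2 * G (p^n) + (p+1) * p^(3*n) = (p^2+p+1) * p^(4*n).
Proof.
move=> pp; elim: n => [|n IH].
  by rewrite !muln0 !expn0 G1; lia.
have p0 := prime_gt0 pp.
have N0 : 0 < p^n by rewrite expn_gt0 p0.
have cop : forall x, ~~ (p %| x) -> coprime (p * p^n) x.
  by move=> x hx; rewrite -expnS coprimeXl // prime_coprime.
have H := Grec pp N0 cop.
rewrite -expnS in H.
have E3 : (p^n)^3 = p^(3*n) by rewrite -expnM mulnC.
have E4 : (p^(n.+1))^4 = p^4 * p^(4*n) by rewrite -expnM -expnD; congr (_ ^ _); lia.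
have E3' : p^(3*n.+1) = p^3 * p^(3*n) by rewrite -expnD; congr (_ ^ _); lia.
have E4' : p^(4*n.+1) = p^4 * p^(4*n) by rewrite -expnD; congr (_ ^ _); lia.
rewrite E3 E4 expnS in H.
rewrite E3' E4'.
move: H IH; set P3 := p^(3*n); set P4 := p^(4*n); set Ga := G _; set Gb := G _.
move=> H IH.
have E5 : P3 * (p * p^n) = p * P4.
  by rewrite mulnCA /P3 /P4 -expnD; congr (_ * (_ ^ _)); lia.
rewrite E5 in H.
have H1 := congr1 (muln (p^2)) H.
have H2 := congr1 (muln (p^3)) IH.
rewrite /= in H1 H2. rewrite expnS -/Ga. move: H1 H2 {H IH E5 E3 E4 E3' E4' cop}. rewrite !expnS !expn0 !muln1. move=> H1 H2.
lia.
Qed.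


Definition mk2 (T : Type) (a b c d : T) : 'M[T]_2 :=
  \matrix_(i, j) if (i : nat) == 0 then (if (j : nat) == 0 then a else b)
                 else (if (j : nat) == 0 then c else d).

Lemma mk2_eq0 (T : zmodType) (a b c d : T) :
  (mk2 a b c d == 0)%R = [&& a == 0, b == 0, c == 0 & d == 0]%R.
Proof.
apply/eqP/and4P => [H|[/eqP-> /eqP-> /eqP-> /eqP->]].
  have h i j := congr1 (fun M : 'M[T]_2 => M i j) H.
  move: (h ord0 ord0) (h ord0 ord_max) (h ord_max ord0) (h ord_max ord_max); rewrite !mxE /=.
  by move=> -> -> -> ->.
apply/matrixP => i j; rewrite !mxE.
by case: ifP; case: ifP.
Qed.

Lemma comm_mk2 (T : comPzRingType) (e b c d u y z w : T) :
  (mk2 (e + d) b c d *m mk2 (u + w) y z w == mk2 (u + w) y z w *m mk2 (e + d) b c d)%R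
  = [&& b * z == c * y, e * y == b * u & c * u == e * z]%R.
Proof.
rewrite -subr_eq0.
have -> : (mk2 (e + d) b c d *m mk2 (u + w) y z w - mk2 (u + w) y z w *m mk2 (e + d) b c d
   = mk2 (b * z - c * y) (e * y - b * u) (c * u - e * z) (c * y - b * z))%R.
  apply/matrixP => i j; rewrite !mxE !big_ord_recr !big_ord0 /= !mxE.
  case: i => [[|[|i]]] //= _; case: j => [[|[|j]]] //= _; ring.
rewrite mk2_eq0 !subr_eq0 [(c * y == _)%R]eq_sym.
by case: (_ == _)%R; case: (_ == _)%R; case: (_ == _)%R.
Qed.

Lemma sum_mx2 (T : finZmodType) (F : 'M[T]_2 -> nat) :
  \sum_(A : 'M[T]_2) F A =
  \sum_(e : T) \sum_(b : T) \sum_(c : T) \sum_(d : T) F (mk2 (e + d) b c d)%R.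
Proof.
pose h (x : T * (T * (T * T))) := mk2 (x.1 + x.2.2.2)%R x.2.1 x.2.2.1 x.2.2.2.
pose g (A : 'M[T]_2) := ((A ord0 ord0 - A ord_max ord_max)%R, (A ord0 ord_max, (A ord_max ord0, A ord_max ord_max))).
have hK : cancel h g.
  case=> e [b [c d]]; rewrite /g /h !mxE /=; by rewrite addrK.
have gK : cancel g h.
  move=> A; apply/matrixP => i j; rewrite /g /h !mxE /=.
  case: i => [[|[|i]]] //= Hi; case: j => [[|[|j]]] //= Hj; rewrite ?subrK;
    congr (A _ _); apply: val_inj => //.
rewrite (reindex h); last by exists g => x _.
symmetry.
transitivity (\sum_(e : T) \sum_(b : T) \sum_(q : T * T) F (mk2 (e + q.2) b q.1 q.2)%R).
  apply: eq_bigr => e _; apply: eq_bigr => b _.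
  exact: (pair_bigA _ (fun c d => F (mk2 (e + d) b c d)%R)).
transitivity (\sum_(e : T) \sum_(r : T * (T * T)) F (mk2 (e + r.2.2) r.1 r.2.1 r.2.2)%R).
  apply: eq_bigr => e _.
  exact: (pair_bigA _ (fun b (q : T * T) => F (mk2 (e + q.2) b q.1 q.2)%R)).
exact: (pair_bigA _ (fun e (r : T * (T * T)) => F (mk2 (e + r.2.2) r.1 r.2.1 r.2.2)%R)).
Qed.

Lemma eqZ k (x y z w : 'I_k.+2) : (x * y == z * w)%R = (x * y == z * w %[mod k.+2]).
Proof. by rewrite natZ // !natrM !natr_Zp. Qed.

Lemma count_k k :
  #|[set AB : 'M['I_k.+2]_2 * 'M['I_k.+2]_2 | (AB.1 *m AB.2 == AB.2 *m AB.1)%R]| = (k.+2)^2 * G k.+2.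
Proof.
rewrite -sum1_card big_mkcond /=.
under eq_bigr => AB _ do rewrite inE.
rewrite -(pair_bigA _ (fun A B => if (A *m B == B *m A)%R then 1 else 0)) /=.
transitivity (\sum_(e : 'I_k.+2) \sum_(b : 'I_k.+2) \sum_(c : 'I_k.+2) \sum_(d : 'I_k.+2)
  \sum_(u : 'I_k.+2) \sum_(y : 'I_k.+2) \sum_(z : 'I_k.+2) \sum_(w : 'I_k.+2)
   ([&& b * z == c * y, e * y == b * u & c * u == e * z]%R : nat)).
  rewrite sum_mx2; do 4 (apply: eq_bigr => ? _).
  rewrite sum_mx2; do 4 (apply: eq_bigr => ? _).
  by rewrite comm_mk2; case: ifP.
rewrite /G -S3Ml /S3.
apply: eq_bigr => e _; apply: eq_bigr => b _; apply: eq_bigr => c _.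
rewrite sum_nat_const card_ord expnS expn1 -mulnA; congr (_ * _).
rewrite /K big_distrr; apply: eq_bigr => u _.
rewrite big_distrr; apply: eq_bigr => y _.
rewrite big_distrr; apply: eq_bigr => z _.
by rewrite sum_nat_const card_ord /cond -!eqZ.
Qed.

Lemma C2_eq p n : 1 < p^n -> C2 p n = (p^n)^2 * G (p^n).
Proof. by move=> N1; rewrite /C2 count_k Zp_cast. Qed.

End CountPart.
Import CountPart.

Local Open Scope classical_set_scope.
Local Open Scope ring_scope.

Lemma pn_gt1 p n : prime p -> (0 < n)%N -> (1 < p ^ n)%N.
Proof.
move=> pp n0; apply: (leq_trans (prime_gt1 pp)).
by rewrite -{1}(expn1 p) leq_pexp2l // prime_gt0.
Qed.

Lemma sigma_formula (R : realType) p : prime p ->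
  sigma_p R p = 1 + (p%:R)^-1 + (p%:R)^-1 ^+ 2.
Proof.
move=> pp.
have P2 : (2 : R) <= p%:R by rewrite (ler_nat R 2 p) prime_gt1.
have P0 : (p%:R : R) != 0 by apply/eqP => h; rewrite h in P2; lra.
have P1 : (p%:R : R) ^+ 2 - 1 != 0 by apply/eqP => h; nra.
by rewrite /sigma_p; field; rewrite P0 P1.
Qed.

Lemma ratio_formula (R : realType) p n : prime p -> (0 < n)%N ->
  C2_ratio R p n = 1 + (p%:R)^-1 + (p%:R)^-1 ^+ 2
     - ((p%:R)^-1 + (p%:R)^-1 ^+ 2) * (p%:R)^-1 ^+ n.
Proof.
move=> pp n0.
have P2 : (2 : R) <= p%:R by rewrite (ler_nat R 2 p) prime_gt1.
have P0 : (p%:R : R) != 0 by apply/eqP => h; rewrite h in P2; lra.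
have Hg := congr1 (fun m : nat => (m%:R : R)) (Gclosed n pp).
rewrite /= !(natrD, natrM, natrX) in Hg.
rewrite /C2_ratio C2_eq ?pn_gt1 // natrM !natrX.
move: Hg; set g := ((G (p ^ n))%:R : R).
rewrite [(3 * n)%N]mulnC [(4 * n)%N]mulnC [(6 * n)%N]mulnC !exprM => Hg; clearbody g.
have X0 : (p%:R : R) ^+ n != 0 by rewrite expf_neq0.
rewrite [(p%:R : R)^-1 ^+ n]exprVn.
move: X0 Hg; move: ((p%:R : R) ^+ n) => X X0 Hg.
have gE : g = (((p%:R) ^+ 2 + p%:R + 1) * X ^+ 4 - (p%:R + 1) * X ^+ 3) / (p%:R) ^+ 2.
  by rewrite -Hg; field.
rewrite gE; field.
by rewrite X0 P0.
Qed.

Theorem theorem1p3 (R : realType) :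
  (exists C : R, forall p n : nat, prime p -> (0 < n)%N ->
     `| C2_ratio R p n - main_term R p n |
       <= C * (n%:R ^+ 2) * (Num.sqrt (p%:R))^-n)
  /\ (forall p : nat, prime p ->
        (fun n : nat => C2_ratio R p n) @ \oo --> sigma_p R p).
Proof.
split.
  exists 3 => p n pp n0.
  rewrite ratio_formula // /main_term sigma_formula //.
  have P2 : (2 : R) <= p%:R by rewrite (ler_nat R 2 p) prime_gt1.
  have P0 : (0 : R) < p%:R by lra.
  set t := (p%:R : R)^-1.
  have t0 : 0 < t by rewrite invr_gt0.
  have t2 : t <= 2^-1 by rewrite lef_pV2 ?posrE //; lra.
  have hn : (n <= 2 * uphalf n)%N.
    by rewrite uphalf_half -{1}(odd_double_half n) -mul2n; case: (odd n); lia.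
  have uv : t ^+ (2 * uphalf n) <= t ^+ n.
    by apply: ler_wiXn2l => //; [exact: ltW | lra].
  have s1 : 1 <= Num.sqrt (p%:R : R) by rewrite -[X in X <= _]sqrtr1; apply: ler_wsqrtr; lra.
  have sP : Num.sqrt (p%:R : R) <= p%:R.
    rewrite -{2}(@sqr_sqrtr _ (p%:R : R)) ?expr2; last exact: ltW.
    by rewrite ler_peMl //; lra.
  have ts : t <= (Num.sqrt (p%:R : R))^-1.
    by rewrite lef_pV2 ?posrE //; lra.
  have vw : t ^+ n <= (Num.sqrt (p%:R : R))^-1 ^+ n.
    by apply: lerXn2r => //; rewrite nnegrE ?invr_ge0; lra.
  have N2 : 1 <= (n%:R : R) ^+ 2.
    by rewrite -natrX ler1n expn_gt0 n0.
  rewrite -!exprVn -/t.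
  have u0 : 0 <= t ^+ (2 * uphalf n) by rewrite exprn_ge0 // ltW.
  have sg1 : 1 <= 1 + t + t ^+ 2 by nra.
  have sg2 : 1 + t + t ^+ 2 <= 2 by nra.
  have k0 : 0 <= t + t ^+ 2 by nra.
  have k1 : t + t ^+ 2 <= 1 by nra.
  move: uv vw N2 u0 sg1 sg2 k0 k1.
  move: (t ^+ (2 * uphalf n)) (t ^+ n) ((Num.sqrt (p%:R : R))^-1 ^+ n) ((n%:R : R) ^+ 2)
        (1 + t + t ^+ 2) (t + t ^+ 2) => u v w m s k.
  move=> uv vw N2 u0 sg1 sg2 k0 k1.
  rewrite ler_norml; apply/andP; split; nra.
move=> p pp.
have P2 : (2 : R) <= p%:R by rewrite (ler_nat R 2 p) prime_gt1.
have P0 : (0 : R) < p%:R by lra.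
set t := (p%:R : R)^-1.
have t0 : 0 < t by rewrite invr_gt0.
have t1 : `|t| < 1.
  by rewrite gtr0_norm // invf_lt1 //; lra.
have h1 : (fun n : nat => t ^+ n) @ \oo --> 0 := cvg_expr t1.
have : (fun n : nat => (1 + t + t ^+ 2) - (t + t ^+ 2) * t ^+ n) @ \oo
        --> (1 + t + t ^+ 2) - (t + t ^+ 2) * 0.
  apply: cvgB; first exact: cvg_cst.
  apply: cvgM; first exact: cvg_cst.
  exact: h1.
rewrite mulr0 subr0 -sigma_formula // => H.
apply: cvg_trans H; apply: near_eq_cvg.
exists 1%N => // n /= n0.
by rewrite ratio_formula // sigma_formula.
Qed.
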